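(* Let $(g(m))_{m\ge1}$ be a sequence of complex numbers such that the series $\sum_{m\ge1}g(m)/m$ and $\sum_{m\ge1}g(m)(\log m)/m$ both converge. Define $G^\sharp(x)=\sum_{m>x}g(m)/m$ for real $x>0$ and assume that $\int_1^\infty|G^\sharp(t)|\,dt/t$ converges. Then for every real $D\ge1$, \[ \sum_{n\le D}\frac{(g\star\mathbf 1)(n)}{n}=\sum_{m\ge1}\frac{g(m)}{m}\Bigl(\log\frac{D}{m}+\gamma\Bigr)+\int_{e^\gamma D}^\infty G^\sharp(t)\frac{dt}{t}+E, \] where \[ |E|\le \frac1D\int_1^{e^\gamma}\sum_{m\le uD}|g(m)|\,\frac{du}{u}. \]
   Context: $\gamma$ is Euler's constant. $(g\star\mathbf 1)(n)=\sum_{m\mid n}g(m)$ is the Dirichlet convolution of $g$ with the constant function $1$. *)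

(* Defs.v *)
From Stdlib Require Import Reals List Arith ZArith.
From Coquelicot Require Import Coquelicot.
Import ListNotations.

Open Scope R_scope.

Definition harmonic (N : nat) : R := sum_f_R0 (fun k => / INR (S k)) (pred N).
Definition euler_gamma : R := real (Lim_seq (fun N => harmonic N - ln (INR N))).

Definition sumC_le (f : nat -> C) (x : R) : C :=
  fold_right Cplus (RtoC 0)
    (map f (filter (fun n => if Rle_dec (INR n) x then true else false)
                   (seq 1 (Z.to_nat (up x))))).

Definition sumR_le (f : nat -> R) (x : R) : R :=
  fold_right Rplus 0
    (map f (filter (fun n => if Rle_dec (INR n) x then true else false)
                   (seq 1 (Z.to_nat (up x))))).

Definition conv1 (g : nat -> C) (n : nat) : C :=
  fold_right Cplus (RtoC 0)
    (map g (filter (fun m => Nat.eqb (n mod m) 0) (seq 1 n))).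

(* Sum of a complex series, taken componentwise (a complex series converges
   iff its real and imaginary parts do, with sum = sum of parts). *)
Definition SeriesC (a : nat -> C) : C :=
  (Series (fun k => Re (a k)), Series (fun k => Im (a k))).

Definition Gsharp (g : nat -> C) (x : R) : C :=
  SeriesC (fun k : nat => if Rlt_dec x (INR (S k))
                         then ((g (S k) / RtoC (INR (S k)))%C : C) else (RtoC 0 : C)).

(* Main.v *)
Require Import Defs.
From Stdlib Require Import Reals List Arith ZArith.
From Coquelicot Require Import Coquelicot.
From Stdlib Require Import Lra Lia Psatz.
Open Scope R_scope.

Fixpoint sR (f : nat -> R) (n : nat) : R :=
  match n with O => 0 | S p => sR f p + f (S p) end.
Fixpoint sC (f : nat -> C) (n : nat) : C :=
  match n with O => RtoC 0 | S p => Cplus (sC f p) (f (S p)) end.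

Lemma sR_ext (f h : nat -> R) (n : nat) :
  (forall k, (1 <= k <= n)%nat -> f k = h k) -> sR f n = sR h n.
Proof.
  induction n as [|n IH]; intros H; cbn [sR]; [reflexivity|].
  rewrite IH by (intros; apply H; lia). rewrite H by lia. reflexivity.
Qed.
Lemma sC_ext (f h : nat -> C) (n : nat) :
  (forall k, (1 <= k <= n)%nat -> f k = h k) -> sC f n = sC h n.
Proof.
  induction n as [|n IH]; intros H; cbn [sC]; [reflexivity|].
  rewrite IH by (intros; apply H; lia). rewrite H by lia. reflexivity.
Qed.
Lemma sR_plus (f h : nat -> R) n : sR (fun k => f k + h k) n = sR f n + sR h n.
Proof. induction n; cbn [sR]; [ring|rewrite IHn; ring]. Qed.
Lemma sC_plus (f h : nat -> C) n : sC (fun k => Cplus (f k) (h k)) n = Cplus (sC f n) (sC h n).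
Proof. induction n; cbn [sC]; [ring|rewrite IHn; ring]. Qed.
Lemma sR_scal (c : R) (f : nat -> R) n : sR (fun k => c * f k) n = c * sR f n.
Proof. induction n; cbn [sR]; [ring|rewrite IHn; ring]. Qed.
Lemma sC_scal (c : C) (f : nat -> C) n : sC (fun k => Cmult c (f k)) n = Cmult c (sC f n).
Proof. induction n; cbn [sC]; [ring|rewrite IHn; ring]. Qed.
Lemma sR_zero n : sR (fun _ => 0) n = 0.
Proof. induction n; cbn [sR]; [ring|rewrite IHn; ring]. Qed.
Lemma sC_zero n : sC (fun _ => RtoC 0) n = RtoC 0.
Proof. induction n; cbn [sC]; [ring|rewrite IHn; ring]. Qed.
Lemma sR_switch (f : nat -> nat -> R) K1 K2 :
  sR (fun i => sR (fun j => f i j) K2) K1 = sR (fun j => sR (fun i => f i j) K1) K2.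
Proof.
  induction K1; cbn [sR].
  - symmetry. apply sR_zero.
  - rewrite IHK1. rewrite <- sR_plus. reflexivity.
Qed.
Lemma sC_switch (f : nat -> nat -> C) K1 K2 :
  sC (fun i => sC (fun j => f i j) K2) K1 = sC (fun j => sC (fun i => f i j) K1) K2.
Proof.
  induction K1; cbn [sC].
  - symmetry. apply sC_zero.
  - rewrite IHK1. rewrite <- sC_plus. reflexivity.
Qed.
Lemma sC_RtoC (f : nat -> R) n : RtoC (sR f n) = sC (fun k => RtoC (f k)) n.
Proof. induction n; cbn [sR sC]; [reflexivity|rewrite <- IHn, RtoC_plus; reflexivity]. Qed.
Lemma sR_onehot (f : nat -> R) (j K : nat) :
  sR (fun i => if Nat.eqb i j then f i else 0) K =
  if (andb (Nat.leb 1 j) (Nat.leb j K)) then f j else 0.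
Proof.
  induction K; cbn [sR].
  - destruct (Nat.leb 1 j) eqn:E1; destruct (Nat.leb j 0) eqn:E2; simpl; try reflexivity.
    apply Nat.leb_le in E1, E2. lia.
  - rewrite IHK. destruct (Nat.eqb (S K) j) eqn:E.
    + apply Nat.eqb_eq in E. subst j.
      replace (Nat.leb (S K) K) with false by (symmetry; apply Nat.leb_gt; lia).
      replace (Nat.leb (S K) (S K)) with true by (symmetry; apply Nat.leb_le; lia).
      simpl. ring.
    + apply Nat.eqb_neq in E.
      destruct (Nat.leb 1 j); simpl; [|ring].
      destruct (Nat.leb j K) eqn:E1; destruct (Nat.leb j (S K)) eqn:E2; try ring.
      * apply Nat.leb_le in E1. apply Nat.leb_gt in E2. lia.
      * apply Nat.leb_gt in E1. apply Nat.leb_le in E2. lia.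
Qed.
Lemma sC_norm (f : nat -> C) n : Cmod (sC f n) <= sR (fun k => Cmod (f k)) n.
Proof.
  induction n; cbn [sR sC].
  - rewrite Cmod_0. lra.
  - eapply Rle_trans; [apply Cmod_triangle|]. lra.
Qed.
Lemma sR_le (f h : nat -> R) n : (forall k, (1 <= k <= n)%nat -> f k <= h k) -> sR f n <= sR h n.
Proof.
  induction n; intros H; cbn [sR]; [lra|].
  apply Rplus_le_compat; [apply IHn; intros; apply H; lia|apply H; lia].
Qed.
Lemma sR_ext_zero (f : nat -> R) (n p : nat) :
  (forall k, (n < k <= n + p)%nat -> f k = 0) -> sR f (n + p) = sR f n.
Proof.
  induction p; intros H; [rewrite Nat.add_0_r; reflexivity|].
  replace (n + S p)%nat with (S (n + p)) by lia. cbn [sR]. rewrite IHp by (intros; apply H; lia).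
  rewrite H by lia. ring.
Qed.
Lemma sC_ext_zero (f : nat -> C) (n p : nat) :
  (forall k, (n < k <= n + p)%nat -> f k = RtoC 0) -> sC f (n + p) = sC f n.
Proof.
  induction p; intros H; [rewrite Nat.add_0_r; reflexivity|].
  replace (n + S p)%nat with (S (n + p)) by lia. cbn [sC]. rewrite IHp by (intros; apply H; lia).
  rewrite H by lia. ring.
Qed.

Lemma foldC_acc (l : list C) (a : C) : fold_right Cplus a l = Cplus (fold_right Cplus (RtoC 0) l) a.
Proof. induction l; simpl; [ring|rewrite IHl; ring]. Qed.
Lemma foldR_acc (l : list R) (a : R) : fold_right Rplus a l = fold_right Rplus 0 l + a.
Proof. induction l; simpl; [ring|rewrite IHl; ring]. Qed.

Lemma foldC_seq (f : nat -> C) (p : nat -> bool) U :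
  fold_right Cplus (RtoC 0) (map f (filter p (seq 1 U))) = sC (fun n => if p n then f n else RtoC 0) U.
Proof.
  induction U; [reflexivity|].
  rewrite seq_S, filter_app, map_app, fold_right_app. cbn [sC]. rewrite <- IHU.
  simpl filter. rewrite foldC_acc. f_equal.
  simpl. destruct (p (S U)); simpl; ring.
Qed.
Lemma foldR_seq (f : nat -> R) (p : nat -> bool) U :
  fold_right Rplus 0 (map f (filter p (seq 1 U))) = sR (fun n => if p n then f n else 0) U.
Proof.
  induction U; [reflexivity|].
  rewrite seq_S, filter_app, map_app, fold_right_app. cbn [sR]. rewrite <- IHU.
  simpl filter. rewrite foldR_acc. f_equal.
  simpl. destruct (p (S U)); simpl; ring.
Qed.

Lemma ln1p_lower (x : R) : 0 <= x -> 2 * x / (2 + x) <= ln (1 + x).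
Proof.
  intros Hx.
  destruct (Req_dec x 0) as [->|Hx0].
  { replace (1+0) with 1 by lra. rewrite ln_1. unfold Rdiv. lra. }
  set (f := fun t => ln (1 + t) - 2 * t / (2 + t)).
  assert (H := MVT_gen f 0 x (fun t => / (1 + t) - 4 / (2 + t) ^ 2)).
  rewrite Rmin_left in H by lra. rewrite Rmax_right in H by lra.
  destruct H as [c [Hc Heq]].
  - intros t Ht. unfold f. auto_derive. split; [lra|split;[lra|auto]]. field. lra.
  - intros t Ht. apply derivable_continuous_pt.
    apply ex_derive_Reals_0. unfold f. auto_derive. split;[lra|split;[lra|auto]].
  - unfold f in Heq. replace (1+0) with 1 in Heq by lra. rewrite ln_1 in Heq.
    assert (0 <= / (1 + c) - 4 / (2 + c) ^ 2).
    { assert (/ (1 + c) - 4 / (2 + c) ^ 2 = c^2 / ((1+c)*(2+c)^2)) as -> by (field; lra).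
      apply Rle_mult_inv_pos. nra. apply Rmult_lt_0_compat; nra. }
    assert (2*0/(2+0) = 0) as E0 by (field; lra). rewrite E0 in Heq.
    nra.
Qed.

Lemma ln1p_upper (x : R) : 0 <= x -> ln (1 + x) <= x * (2 + x) / (2 * (1 + x)).
Proof.
  intros Hx.
  destruct (Req_dec x 0) as [->|Hx0].
  { replace (1+0) with 1 by lra. rewrite ln_1. unfold Rdiv. lra. }
  set (f := fun t => t * (2 + t) / (2 * (1 + t)) - ln (1 + t)).
  assert (H := MVT_gen f 0 x (fun t => (1 + / (1 + t)^2) / 2 - / (1 + t))).
  rewrite Rmin_left in H by lra. rewrite Rmax_right in H by lra.
  destruct H as [c [Hc Heq]].
  - intros t Ht. unfold f. auto_derive. split; [lra|split;[lra|auto]]. field. lra.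
  - intros t Ht. apply derivable_continuous_pt.
    apply ex_derive_Reals_0. unfold f. auto_derive. split;[lra|split;[lra|auto]].
  - unfold f in Heq. replace (1+0) with 1 in Heq by lra. rewrite ln_1 in Heq.
    assert (0 <= (1 + / (1 + c)^2) / 2 - / (1 + c)).
    { assert ((1 + / (1 + c)^2) / 2 - / (1 + c) = c^2 / (2*(1+c)^2)) as -> by (field; lra).
      apply Rle_mult_inv_pos. nra. nra. }
    assert (E0: 0*(2+0)/(2*(1+0)) = 0) by (field; lra).
    replace (0 * (2 + 0) / (2 * 1) - 0) with 0 in Heq by (field; lra). nra.
Qed.

Lemma ln_0 : ln 0 = 0.
Proof. unfold ln. destruct (Rlt_dec 0 0) as [h|h]; [exfalso; exact (Rlt_irrefl _ h)|reflexivity]. Qed.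

Definition cseq (n : nat) : R := harmonic n - ln (INR n).

Lemma harmonic_S (n : nat) : (1 <= n)%nat -> harmonic (S n) = harmonic n + / INR (S n).
Proof. intros H. destruct n as [|p]; [lia|]. reflexivity. Qed.

Lemma ln_succ_div (K : R) : 0 < K -> ln (K + 1) - ln K = ln (1 + / K).
Proof.
  intros HK. rewrite <- ln_div by lra. f_equal. field. lra.
Qed.

Lemma d_bounds (k : nat) : (1 <= k)%nat ->
  1 / (2 * INR k + 1) - 1 / (2 * INR (S k) + 1) <= cseq k - cseq (S k) <=
  1 / (2 * INR k) - 1 / (2 * INR (S k)).
Proof.
  intros Hk. unfold cseq. rewrite harmonic_S by lia. rewrite S_INR.
  assert (HK : 1 <= INR k) by (apply (le_INR 1); lia).
  assert (E : harmonic k - ln (INR k) - (harmonic k + / (INR k + 1) - ln (INR k + 1))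
              = (ln (INR k + 1) - ln (INR k)) - / (INR k + 1)) by ring.
  rewrite E, ln_succ_div by lra.
  assert (Hx : 0 <= / INR k) by (apply Rlt_le, Rinv_0_lt_compat; lra).
  pose proof (ln1p_lower _ Hx) as L. pose proof (ln1p_upper _ Hx) as U.
  split.
  - eapply Rle_trans; [|apply Rplus_le_compat_r; exact L].
    apply Rminus_le_0.
    replace (2 * / INR k / (2 + / INR k) + - / (INR k + 1) -
       (1 / (2 * INR k + 1) - 1 / (2 * (INR k + 1) + 1)))
      with (1 / ((2 * INR k + 1) * (INR k + 1) * (2 * INR k + 3))) by (field; lra).
    apply Rlt_le, Rdiv_lt_0_compat; [lra|]. apply Rmult_lt_0_compat; [|lra]. nra.
  - eapply Rle_trans; [apply Rplus_le_compat_r; exact U|].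
    right. field. lra.
Qed.

Lemma c_tele (n p : nat) : (1 <= n)%nat ->
  1 / (2 * INR n + 1) - 1 / (2 * INR (n + p) + 1) <= cseq n - cseq (n + p) <=
  1 / (2 * INR n) - 1 / (2 * INR (n + p)).
Proof.
  intros Hn. induction p as [|p IH].
  - rewrite Nat.add_0_r. lra.
  - replace (n + S p)%nat with (S (n + p)) by lia.
    pose proof (d_bounds (n + p) ltac:(lia)). lra.
Qed.

Lemma c_decr (N : nat) : cseq (S N) <= cseq N.
Proof.
  destruct N as [|N].
  - unfold cseq. simpl. rewrite ln_1. unfold harmonic. simpl.
    rewrite ln_0. lra.
  - pose proof (d_bounds (S N) ltac:(lia)).
    assert (0 < 1 / (2 * INR (S N) + 1) - 1 / (2 * INR (S (S N)) + 1)); [|lra].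
    rewrite (S_INR (S N)). assert (0 < INR (S N)) by (apply lt_0_INR; lia).
    apply Rlt_Rminus. apply Rmult_lt_compat_l; [lra|]. apply Rinv_lt_contravar; nra.
Qed.

Lemma c_lower (N : nat) : 1/2 <= cseq N.
Proof.
  destruct N as [|N].
  - unfold cseq, harmonic. simpl. rewrite ln_0. lra.
  - pose proof (c_tele 1 N ltac:(lia)) as [_ H]. simpl (1 + N)%nat in H.
    assert (cseq 1 = 1) by (unfold cseq, harmonic; simpl; rewrite ln_1; lra).
    assert (0 < INR (S N)) by (apply lt_0_INR; lia).
    assert (0 < 1 / (2 * INR (S N))) by (apply Rdiv_lt_0_compat; lra).
    simpl INR in H at 1. lra.
Qed.

Lemma gamma_lim : is_lim_seq cseq euler_gamma.
Proof.
  assert (Hex : ex_finite_lim_seq cseq).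
  { apply ex_finite_lim_seq_decr with (1/2). apply c_decr. apply c_lower. }
  pose proof (Lim_seq_correct' _ Hex) as H.
  destruct Hex as [l Hl].
  unfold euler_gamma. fold cseq.
  rewrite (is_lim_seq_unique _ _ Hl) in *. exact Hl.
Qed.

Lemma is_lim_inv_lin (a b : R) : 0 < a -> 0 < b ->
  is_lim_seq (fun p => 1 / (a * INR p + b)) 0.
Proof.
  intros Ha Hb.
  apply is_lim_seq_le_le with (u := fun _ => 0) (w := fun p => / Rmin a b * / INR (S p)).
  - intros p. assert (0 <= INR p) by apply pos_INR. rewrite S_INR.
    assert (0 < Rmin a b) by (apply Rmin_glb_lt; lra).
    assert (Rmin a b <= a) by apply Rmin_l. assert (Rmin a b <= b) by apply Rmin_r. split.
    + apply Rlt_le, Rdiv_lt_0_compat; nra.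
    + unfold Rdiv. rewrite Rmult_1_l, <- Rinv_mult. apply Rinv_le_contravar; nra.
  - apply is_lim_seq_const.
  - replace (Finite 0) with (Rbar_mult (/ Rmin a b) 0) by (simpl; f_equal; ring).
    apply is_lim_seq_scal_l.
    replace (Finite 0) with (Rbar_inv p_infty) by reflexivity.
    apply is_lim_seq_inv; [|discriminate].
    apply (is_lim_seq_incr_1 INR). apply is_lim_seq_INR.
Qed.

Lemma c_gamma_bounds (n : nat) : (1 <= n)%nat ->
  1 / (2 * INR n + 1) <= cseq n - euler_gamma <= 1 / (2 * INR n).
Proof.
  intros Hn. pose proof gamma_lim as GL.
  assert (GLn : is_lim_seq (fun p => cseq (n + p)) euler_gamma).
  { apply (is_lim_seq_incr_n _ n) in GL. eapply is_lim_seq_ext; [|exact GL].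
    intros p. simpl. f_equal. lia. }
  split.
  - assert (H : Rbar_le euler_gamma (cseq n - 1 / (2 * INR n + 1))).
    { apply is_lim_seq_le_loc with (u := fun p => cseq (n + p))
        (v := fun p => cseq n - 1 / (2 * INR n + 1) + 1 / (2 * INR (n + p) + 1)).
      - exists 0%nat. intros p _. pose proof (c_tele n p Hn). lra.
      - exact GLn.
      - replace (Finite (cseq n - 1 / (2 * INR n + 1)))
          with (Rbar_plus (cseq n - 1 / (2 * INR n + 1)) 0) by (simpl; f_equal; ring).
        apply is_lim_seq_plus'. apply is_lim_seq_const.
        eapply is_lim_seq_ext; [|apply (is_lim_inv_lin 2 (2 * INR n + 1))].
        + intros p. simpl. f_equal. rewrite plus_INR. ring.
        + lra.
        + assert (0 <= INR n) by apply pos_INR. lra. }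
    simpl in H. lra.
  - assert (H : Rbar_le (cseq n - 1 / (2 * INR n)) euler_gamma).
    { apply is_lim_seq_le_loc with (v := fun p => cseq (n + p))
        (u := fun _ => cseq n - 1 / (2 * INR n)).
      - exists 0%nat. intros p _. pose proof (c_tele n p Hn).
        assert (0 < INR (n + p)) by (apply lt_0_INR; lia).
        assert (0 < 1 / (2 * INR (n + p))) by (apply Rdiv_lt_0_compat; lra). lra.
      - apply is_lim_seq_const.
      - exact GLn. }
    simpl in H. lra.
Qed.

Lemma ln2_le : ln 2 <= 7/10.
Proof.
  pose proof (exp_ge_taylor (7/10) 3 ltac:(lra)) as H. simpl in H.
  rewrite <- (ln_exp (7/10)). apply ln_le; lra.
Qed.

Lemma ln3_le : ln 3 <= 10/9.
Proof.
  pose proof (exp_ge_taylor (10/9) 4 ltac:(lra)) as H. simpl in H.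
  rewrite <- (ln_exp (10/9)). apply ln_le; lra.
Qed.

Lemma cseq1 : cseq 1 = 1.
Proof. unfold cseq, harmonic. simpl. rewrite ln_1. lra. Qed.
Lemma cseq2 : cseq 2 = 3/2 - ln 2.
Proof. unfold cseq, harmonic. simpl. replace (1+1) with 2 by lra. lra. Qed.
Lemma cseq3 : cseq 3 = 11/6 - ln 3.
Proof. unfold cseq, harmonic. simpl. replace (1+1+1) with 3 by lra. lra. Qed.

Lemma gamma_ge_half : 1/2 <= euler_gamma.
Proof.
  pose proof (c_gamma_bounds 2 ltac:(lia)) as H. rewrite cseq2 in H.
  simpl INR in H. pose proof ln2_le. lra.
Qed.

Lemma key_gamma (n : nat) : (1 <= n)%nat ->
  1 - euler_gamma <= INR n * (cseq n - euler_gamma) <= euler_gamma.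
Proof.
  intros Hn. pose proof (c_gamma_bounds n Hn) as [L U].
  assert (HN : 1 <= INR n) by (apply (le_INR 1); lia).
  pose proof gamma_ge_half.
  split.
  - destruct n as [|[|[|[|n]]]]; try lia.
    + rewrite cseq1. simpl. lra.
    + pose proof (c_gamma_bounds 2 ltac:(lia)) as H2. rewrite cseq2 in *.
      simpl INR in *. pose proof ln2_le. lra.
    + pose proof (c_gamma_bounds 3 ltac:(lia)) as H3. rewrite cseq3 in *.
      simpl INR in *. pose proof ln3_le. lra.
    + pose proof (c_gamma_bounds 3 ltac:(lia)) as [_ H3]. rewrite cseq3 in H3.
      simpl INR in H3. pose proof ln3_le.
      set (N := INR (S (S (S (S n))))) in *.
      assert (HN4 : 4 <= N) by (unfold N; rewrite !S_INR; pose proof (pos_INR n); lra).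
      assert (4/9 <= N * (1 / (2 * N + 1))).
      { replace (N * (1 / (2 * N + 1))) with (N / (2 * N + 1)) by (field; lra).
        apply Rmult_le_reg_r with (2 * N + 1); [lra|].
        replace (N / (2 * N + 1) * (2 * N + 1)) with N by (field; lra). lra. }
      assert (N * (1 / (2 * N + 1)) <= N * (cseq (S (S (S (S n)))) - euler_gamma))
        by (apply Rmult_le_compat_l; lra).
      lra.
  - assert (INR n * (cseq n - euler_gamma) <= INR n * (1 / (2 * INR n)))
      by (apply Rmult_le_compat_l; lra).
    replace (INR n * (1 / (2 * INR n))) with (1/2) in H0 by (field; lra). lra.
Qed.

Definition Hy (y : R) (K : nat) : R :=
  sR (fun k => if Rle_dec (INR k) y then / INR k else 0) K.

Lemma sR_harmonic (n : nat) : (1 <= n)%nat -> sR (fun k => / INR k) n = harmonic n.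
Proof.
  induction n as [|n IH]; intros Hn; [lia|].
  destruct n as [|n].
  - unfold harmonic. simpl. lra.
  - simpl sR in *. rewrite IH by lia. rewrite (harmonic_S (S n)) by lia. reflexivity.
Qed.

Lemma Hy_low (y : R) (K : nat) : (forall k, (1 <= k <= K)%nat -> INR k <= y) ->
  Hy y K = sR (fun k => / INR k) K.
Proof.
  intros H. unfold Hy. apply sR_ext. intros k Hk.
  destruct (Rle_dec (INR k) y) as [_|C]; [reflexivity|]. exfalso. apply C, H. lia.
Qed.

Lemma Hy_high (y : R) (n p : nat) : y < INR n + 1 -> Hy y (n + p) = Hy y n.
Proof.
  intros Hy1. induction p as [|p IH]; [rewrite Nat.add_0_r; reflexivity|].
  replace (n + S p)%nat with (S (n + p)) by lia. unfold Hy in *. cbn [sR]. rewrite IH.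
  destruct (Rle_dec (INR (S (n + p))) y) as [C|_]; [|ring].
  exfalso. rewrite S_INR, plus_INR in C. pose proof (pos_INR p). lra.
Qed.

Lemma floor_nat (y : R) : 0 <= y -> exists n : nat, INR n <= y < INR n + 1.
Proof.
  intros Hy0. destruct (archimed y) as [H1 H2].
  assert (Hu : (1 <= up y)%Z) by (assert (0 < up y)%Z by (apply lt_IZR; simpl; lra); lia).
  exists (Z.to_nat (up y - 1)).
  rewrite INR_IZR_INZ, Z2Nat.id by lia. rewrite minus_IZR. simpl. lra.
Qed.

Lemma ln_le_sub1 (z : R) : 0 < z -> ln z <= z - 1.
Proof. intros Hz. pose proof (exp_ineq1_le (ln z)). rewrite exp_ln in H by lra. lra. Qed.

Lemma Hy_bound_ge1 (y : R) (K : nat) : 1 <= y -> y <= INR K ->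
  Rabs (Hy y K - ln y - euler_gamma) <= euler_gamma / y.
Proof.
  intros Hy1 HK. destruct (floor_nat y ltac:(lra)) as [n [Hn1 Hn2]].
  assert (Hn : (1 <= n)%nat).
  { destruct n; [simpl in Hn2; lra|lia]. }
  assert (HnK : (n <= K)%nat) by (apply INR_le; lra).
  replace K with (n + (K - n))%nat by lia. rewrite Hy_high by lra.
  rewrite Hy_low by (intros k Hk; apply Rle_trans with (INR n); [apply le_INR; lia|lra]).
  rewrite sR_harmonic by lia.
  assert (HN : 1 <= INR n) by (apply (le_INR 1); lia).
  pose proof gamma_ge_half as G.
  pose proof (key_gamma n Hn) as [_ KU].
  pose proof (key_gamma (S n) ltac:(lia)) as [KL _].
  pose proof (c_gamma_bounds n Hn) as [_ CU].
  assert (CU' : cseq n - euler_gamma <= 1/2).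
  { eapply Rle_trans; [exact CU|]. apply Rmult_le_reg_r with (2 * INR n); [lra|].
    replace (1 / (2 * INR n) * (2 * INR n)) with 1 by (field; lra). lra. }
  apply Rabs_le. split.
  -
    assert (ln y <= ln (INR n + 1)) by (apply ln_le; lra).
    unfold cseq in KL. rewrite harmonic_S in KL by lia. rewrite S_INR in KL.
    set (e := harmonic n + / (INR n + 1) - ln (INR n + 1) - euler_gamma) in *.
    assert (e - / (INR n + 1) >= - euler_gamma / (INR n + 1)).
    { apply Rle_ge. apply Rmult_le_reg_r with (INR n + 1); [lra|].
      replace ((e - / (INR n + 1)) * (INR n + 1)) with ((INR n + 1) * e - 1) by (field; lra).
      replace (- euler_gamma / (INR n + 1) * (INR n + 1)) with (- euler_gamma) by (field; lra).
      lra. }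
    assert (euler_gamma / (INR n + 1) <= euler_gamma / y).
    { unfold Rdiv. apply Rmult_le_compat_l; [lra|]. apply Rinv_le_contravar; lra. }
    assert (- euler_gamma / (INR n + 1) = - (euler_gamma / (INR n + 1))) by (field; lra).
    unfold e in *. lra.
  -
    assert (Hl : ln (INR n) - ln y <= INR n / y - 1).
    { rewrite <- ln_div by lra. apply ln_le_sub1. apply Rdiv_lt_0_compat; lra. }
    set (e := cseq n - euler_gamma) in *.
    assert (harmonic n = e + euler_gamma + ln (INR n)) by (unfold e, cseq; ring).
    assert (e + INR n / y - 1 <= euler_gamma / y).
    { apply Rmult_le_reg_r with y; [lra|].
      replace ((e + INR n / y - 1) * y) with (e * y + INR n - y) by (field; lra).
      replace (euler_gamma / y * y) with euler_gamma by (field; lra).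
      assert (e * y + INR n - y = INR n * e + (y - INR n) * (e - 1)) by ring.
      assert (0 <= (y - INR n) * (1 - e)) by (apply Rmult_le_pos; lra).
      lra. }
    lra.
Qed.

Lemma Hy_lt1 (y : R) (K : nat) : y < 1 -> Hy y K = 0.
Proof.
  intros H. unfold Hy. induction K as [|K IH]; cbn [sR]; [reflexivity|]. rewrite IH.
  destruct (Rle_dec (INR (S K)) y) as [C|_]; [|ring].
  exfalso. rewrite S_INR in C. pose proof (pos_INR K). lra.
Qed.

Lemma up_bound (x : R) (n : nat) : (Z.to_nat (up x) < n)%nat -> x < INR n.
Proof.
  intros H. destruct (archimed x) as [H1 _].
  assert (IZR (up x) <= INR n); [|lra].
  rewrite INR_IZR_INZ. apply IZR_le. lia.
Qed.

Lemma sumC_le_eq (f : nat -> C) (x : R) (K : nat) : (Z.to_nat (up x) <= K)%nat ->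
  sumC_le f x = sC (fun n => if Rle_dec (INR n) x then f n else RtoC 0) K.
Proof.
  intros HK. unfold sumC_le. rewrite foldC_seq.
  replace K with (Z.to_nat (up x) + (K - Z.to_nat (up x)))%nat by lia.
  rewrite sC_ext_zero.
  - apply sC_ext. intros k _. destruct (Rle_dec (INR k) x); reflexivity.
  - intros k Hk. destruct (Rle_dec (INR k) x) as [C|]; [|reflexivity].
    pose proof (up_bound x k ltac:(lia)). lra.
Qed.

Lemma sumR_le_eq (f : nat -> R) (x : R) (K : nat) : (Z.to_nat (up x) <= K)%nat ->
  sumR_le f x = sR (fun n => if Rle_dec (INR n) x then f n else 0) K.
Proof.
  intros HK. unfold sumR_le. rewrite foldR_seq.
  replace K with (Z.to_nat (up x) + (K - Z.to_nat (up x)))%nat by lia.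
  rewrite sR_ext_zero.
  - apply sR_ext. intros k _. destruct (Rle_dec (INR k) x); reflexivity.
  - intros k Hk. destruct (Rle_dec (INR k) x) as [C|]; [|reflexivity].
    pose proof (up_bound x k ltac:(lia)). lra.
Qed.

Lemma conv1_eq (g : nat -> C) (n K : nat) : (1 <= n <= K)%nat ->
  conv1 g n = sC (fun m => if Nat.eqb (n mod m) 0 then g m else RtoC 0) K.
Proof.
  intros HK. unfold conv1. rewrite foldC_seq.
  replace K with (n + (K - n))%nat by lia. rewrite sC_ext_zero; [reflexivity|].
  intros k Hk. rewrite Nat.mod_small by lia.
  destruct n; [lia|reflexivity].
Qed.

Lemma div_indicator (m n K : nat) : (1 <= m)%nat -> (1 <= n <= K)%nat ->
  (if Nat.eqb (n mod m) 0 then 1 else 0) =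
  sR (fun k => if Nat.eqb (k * m) n then 1 else 0) K.
Proof.
  intros Hm Hn. destruct (Nat.eqb (n mod m) 0) eqn:E.
  - apply Nat.eqb_eq in E. apply Nat.Div0.mod_divides in E. destruct E as [q Hq].
    assert (Hq1 : (1 <= q)%nat) by (destruct q; lia).
    assert (HqK : (q <= K)%nat) by nia.
    transitivity (sR (fun k => if Nat.eqb k q then 1 else 0) K).
    + rewrite sR_onehot.
      replace (Nat.leb 1 q) with true by (symmetry; apply Nat.leb_le; lia).
      replace (Nat.leb q K) with true by (symmetry; apply Nat.leb_le; lia). reflexivity.
    + apply sR_ext. intros k _. subst n.
      destruct (Nat.eqb k q) eqn:E1; destruct (Nat.eqb (k * m) (m * q)) eqn:E2; try reflexivity.
      * apply Nat.eqb_eq in E1. apply Nat.eqb_neq in E2. subst. lia.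
      * apply Nat.eqb_neq in E1. apply Nat.eqb_eq in E2. nia.
  - symmetry. transitivity (sR (fun _ => 0) K); [|apply sR_zero]. apply sR_ext. intros k _.
    destruct (Nat.eqb (k * m) n) eqn:E2; [|reflexivity].
    apply Nat.eqb_eq in E2. apply Nat.eqb_neq in E. exfalso. apply E. subst n.
    apply Nat.Div0.mod_mul.
Qed.

Lemma inner_sum (m K : nat) (D : R) : (1 <= m)%nat -> D <= INR K ->
  sR (fun n => if Rle_dec (INR n) D then (if Nat.eqb (n mod m) 0 then 1 else 0) / INR n else 0) K
  = Hy (D / INR m) K / INR m.
Proof.
  intros Hm HK.
  assert (HM : 1 <= INR m) by (apply (le_INR 1); lia).
  transitivity (sR (fun n => sR (fun k => if Nat.eqb n (k * m) then
                   (if Rle_dec (INR n) D then / INR n else 0) else 0) K) K).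
  - apply sR_ext. intros n Hn. rewrite (div_indicator m n K) by lia.
    destruct (Rle_dec (INR n) D).
    + unfold Rdiv. rewrite Rmult_comm, <- sR_scal. apply sR_ext. intros k _.
      destruct (Nat.eqb n (k*m)) eqn:E1; destruct (Nat.eqb (k*m) n) eqn:E2; try ring.
      * apply Nat.eqb_eq in E1. apply Nat.eqb_neq in E2. lia.
      * apply Nat.eqb_eq in E2. apply Nat.eqb_neq in E1. lia.
    + transitivity (sR (fun _ => 0) K); [symmetry; apply sR_zero|].
      apply sR_ext; intros k _; destruct (Nat.eqb n (k * m)); reflexivity.
  - rewrite sR_switch. unfold Hy. unfold Rdiv. rewrite Rmult_comm, <- sR_scal.
    apply sR_ext. intros k Hk. rewrite sR_onehot. cbv beta.
    assert (HkR : 1 <= INR k) by (apply (le_INR 1); lia).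
    destruct (Rle_dec (INR k) (D * / INR m)) as [C|C].
    + assert (INR k * INR m <= D).
      { apply Rmult_le_reg_r with (/ INR m). apply Rinv_0_lt_compat; lra.
        rewrite Rmult_assoc, Rinv_r, Rmult_1_r by lra. exact C. }
      replace (Nat.leb 1 (k * m)) with true by (symmetry; apply Nat.leb_le; nia).
      replace (Nat.leb (k * m) K) with true.
      2:{ symmetry; apply Nat.leb_le. apply INR_le. rewrite mult_INR. lra. }
      simpl. rewrite mult_INR. destruct (Rle_dec (INR k * INR m) D); [|lra].
      rewrite Rinv_mult. ring.
    + destruct (andb _ _); [|ring]. rewrite mult_INR.
      destruct (Rle_dec (INR k * INR m) D) as [C2|]; [|ring].
      exfalso. apply C. apply Rmult_le_reg_r with (INR m); [lra|].
      rewrite Rmult_assoc, Rinv_l, Rmult_1_r by lra. exact C2.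
Qed.

Lemma RtoC_neq0 (x : R) : x <> 0 -> RtoC x <> RtoC 0.
Proof. intros H E. apply H. apply RtoC_inj in E. exact E. Qed.

Lemma LHS_eq (g : nat -> C) (D : R) (K : nat) : 1 <= D -> D <= INR K -> (Z.to_nat (up D) <= K)%nat ->
  sumC_le (fun n => (conv1 g n / RtoC (INR n))%C) D =
  sC (fun m => (g m / RtoC (INR m) * RtoC (Hy (D / INR m) K))%C) K.
Proof.
  intros HD1 HDK HU. rewrite (sumC_le_eq _ _ K HU).
  set (r := fun n m => if Rle_dec (INR n) D then (if Nat.eqb (n mod m) 0 then 1 else 0) / INR n else 0).
  transitivity (sC (fun n => sC (fun m => (RtoC (r n m) * g m)%C) K) K).
  - apply sC_ext. intros n Hn. unfold r.
    assert (HnR : INR n <> 0) by (apply not_0_INR; lia).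
    destruct (Rle_dec (INR n) D).
    + rewrite (conv1_eq g n K) by lia.
      unfold Cdiv. rewrite Cmult_comm, <- sC_scal. apply sC_ext. intros m _.
      destruct (Nat.eqb (n mod m) 0).
      * rewrite RtoC_div by exact HnR. field. apply RtoC_neq0. exact HnR.
      * unfold Rdiv. rewrite Rmult_0_l. ring.
    + transitivity (sC (fun _ => RtoC 0) K); [symmetry; apply sC_zero|].
      apply sC_ext. intros m _. ring.
  - rewrite sC_switch. apply sC_ext. intros m Hm.
    assert (HmR : INR m <> 0) by (apply not_0_INR; lia).
    transitivity (RtoC (sR (fun n => r n m) K) * g m)%C.
    + rewrite sC_RtoC, Cmult_comm, <- sC_scal. apply sC_ext. intros n _. ring.
    + unfold r. rewrite inner_sum by (try lia; lra).
      rewrite RtoC_div by exact HmR. field. apply RtoC_neq0. exact HmR.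
Qed.

Lemma lim_prod_intro {T : Type} {F : (T -> Prop) -> Prop} {FF : Filter F}
  {U V : UniformSpace} (u : T -> U * V) (l : U * V) :
  filterlim (fun x => fst (u x)) F (locally (fst l)) ->
  filterlim (fun x => snd (u x)) F (locally (snd l)) ->
  @filterlim _ (prod_UniformSpace U V) u F (locally l).
Proof.
  intros H1 H2. apply filterlim_locally. intros eps.
  apply filterlim_locally with (eps := eps) in H1.
  apply filterlim_locally with (eps := eps) in H2.
  generalize (filter_and _ _ H1 H2). apply filter_imp. intros x [A B]. split; assumption.
Qed.

Lemma lim_prod_fst {T : Type} {F : (T -> Prop) -> Prop} {FF : Filter F}
  {U V : UniformSpace} (u : T -> U * V) (l : U * V) :
  @filterlim _ (prod_UniformSpace U V) u F (locally l) ->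
  filterlim (fun x => fst (u x)) F (locally (fst l)).
Proof.
  intros H. apply filterlim_locally. intros eps.
  apply (proj1 (filterlim_locally _ _)) with (eps := eps) in H.
  revert H. apply filter_imp. intros x [A B]. exact A.
Qed.

Lemma lim_prod_snd {T : Type} {F : (T -> Prop) -> Prop} {FF : Filter F}
  {U V : UniformSpace} (u : T -> U * V) (l : U * V) :
  @filterlim _ (prod_UniformSpace U V) u F (locally l) ->
  filterlim (fun x => snd (u x)) F (locally (snd l)).
Proof.
  intros H. apply filterlim_locally. intros eps.
  apply (proj1 (filterlim_locally _ _)) with (eps := eps) in H.
  revert H. apply filter_imp. intros x [A B]. exact B.
Qed.

Lemma sum_n_sC (a : nat -> C) (n : nat) :
  @sum_n C_AbelianMonoid (fun k => a (S k)) n = sC a (S n).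
Proof.
  induction n.
  - rewrite sum_O. cbn [sC]. symmetry. apply Cplus_0_l.
  - rewrite sum_Sn, IHn. reflexivity.
Qed.

Lemma sum_n_sR (a : nat -> R) (n : nat) :
  sum_n (fun k => a (S k)) n = sR a (S n).
Proof.
  induction n.
  - rewrite sum_O. cbn [sR]. symmetry. apply Rplus_0_l.
  - rewrite sum_Sn, IHn. reflexivity.
Qed.

Lemma Re_sC (f : nat -> C) n : Re (sC f n) = sR (fun k => Re (f k)) n.
Proof. induction n; cbn [sC sR]; [reflexivity|]. rewrite re_plus, IHn. reflexivity. Qed.
Lemma Im_sC (f : nat -> C) n : Im (sC f n) = sR (fun k => Im (f k)) n.
Proof. induction n; cbn [sC sR]; [reflexivity|]. rewrite <- IHn. reflexivity. Qed.

Lemma series_C_comp (a : nat -> C) (Sv : C) :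
  @is_series C_AbsRing C_NormedModule (fun k => a (S k)) Sv ->
  is_lim_seq (fun n => sR (fun k => Re (a k)) n) (Re Sv) /\
  is_lim_seq (fun n => sR (fun k => Im (a k)) n) (Im Sv).
Proof.
  intros H. unfold is_series in H.
  assert (H' : @filterlim nat (prod_UniformSpace R_UniformSpace R_UniformSpace)
                (fun n => sC a (S n)) eventually (locally Sv)).
  { eapply filterlim_ext; [|exact H]. intros n. apply sum_n_sC. }
  split.
  - apply (is_lim_seq_incr_1 (fun n => sR (fun k => Re (a k)) n)).
    pose proof (lim_prod_fst _ _ H') as H1. eapply filterlim_ext; [|exact H1].
    intros n. simpl. rewrite <- Re_sC. reflexivity.
  - apply (is_lim_seq_incr_1 (fun n => sR (fun k => Im (a k)) n)).
    pose proof (lim_prod_snd _ _ H') as H1. eapply filterlim_ext; [|exact H1].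
    intros n. simpl. rewrite <- Im_sC. reflexivity.
Qed.

Lemma series_C_intro (a : nat -> C) (Sv : C) :
  is_lim_seq (fun n => sR (fun k => Re (a k)) n) (Re Sv) ->
  is_lim_seq (fun n => sR (fun k => Im (a k)) n) (Im Sv) ->
  @is_series C_AbsRing C_NormedModule (fun k => a (S k)) Sv.
Proof.
  intros H1 H2. unfold is_series.
  apply (is_lim_seq_incr_1 (fun n => sR (fun k => Re (a k)) n)) in H1.
  apply (is_lim_seq_incr_1 (fun n => sR (fun k => Im (a k)) n)) in H2.
  assert (H : @filterlim nat (prod_UniformSpace R_UniformSpace R_UniformSpace)
                (fun n => sC a (S n)) eventually (locally Sv)).
  { apply lim_prod_intro.
    - eapply filterlim_ext; [|exact H1]. intros n. simpl. rewrite <- Re_sC. reflexivity.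
    - eapply filterlim_ext; [|exact H2]. intros n. simpl. rewrite <- Im_sC. reflexivity. }
  eapply filterlim_ext; [|exact H]. intros n. symmetry. apply sum_n_sC.
Qed.

Definition alpha (g : nat -> C) (m : nat) : C := (g m / RtoC (INR m))%C.

Lemma real_series_from_sR (b : nat -> R) (l : R) :
  is_lim_seq (fun n => sR b n) l -> Series (fun k => b (S k)) = l.
Proof.
  intros H. apply is_series_unique.
  apply (is_lim_seq_incr_1 (fun n => sR b n)) in H.
  unfold is_series. eapply filterlim_ext; [|exact H]. intros n. simpl. symmetry. apply sum_n_sR.
Qed.

Lemma tail_lim (b : nat -> R) (l : R) (t : R) (N : nat) :
  t < INR N + 1 ->
  is_lim_seq (fun n => sR b n) l ->
  is_lim_seq (fun n => sR (fun m => if Rlt_dec t (INR m) then b m else 0) n)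
    (l - sR (fun m => if Rle_dec (INR m) t then b m else 0) N).
Proof.
  intros HN H.
  apply is_lim_seq_ext_loc with
    (u := fun n => sR b n - sR (fun m => if Rle_dec (INR m) t then b m else 0) N).
  - exists N. intros n Hn.
    assert (E : sR (fun m => if Rle_dec (INR m) t then b m else 0) n =
                sR (fun m => if Rle_dec (INR m) t then b m else 0) N).
    { replace n with (N + (n - N))%nat by lia. apply sR_ext_zero.
      intros k Hk. destruct (Rle_dec (INR k) t) as [C|]; [|reflexivity].
      exfalso. assert (INR N + 1 <= INR k) by (rewrite <- S_INR; apply le_INR; lia). lra. }
    rewrite <- E.
    replace (sR b n - sR (fun m => if Rle_dec (INR m) t then b m else 0) n)
      with (sR (fun m => b m + - 1 * (if Rle_dec (INR m) t then b m else 0)) n)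
      by (rewrite sR_plus, sR_scal; ring).
    apply sR_ext. intros k _. destruct (Rlt_dec t (INR k)); destruct (Rle_dec (INR k) t); lra.
  - apply is_lim_seq_minus'; [exact H|apply is_lim_seq_const].
Qed.

Lemma Gsharp_Re (g : nat -> C) (Sv : C)
  (HS : @is_series C_AbsRing C_NormedModule (fun k => alpha g (S k)) Sv) (t : R) (N : nat) :
  t < INR N + 1 ->
  Re (Gsharp g t) = Re Sv - sR (fun m => if Rle_dec (INR m) t then Re (alpha g m) else 0) N.
Proof.
  intros HN. unfold Gsharp, SeriesC. unfold Re at 1. cbv beta iota delta [fst].
  rewrite (Series_ext _ (fun k => (fun m => if Rlt_dec t (INR m) then Re (alpha g m) else 0) (S k))).
  - apply (real_series_from_sR (fun m => if Rlt_dec t (INR m) then Re (alpha g m) else 0)).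
    apply tail_lim; [exact HN|].
    apply (series_C_comp _ _ HS).
  - intros k. destruct (Rlt_dec t (INR (S k))); reflexivity.
Qed.

Lemma Gsharp_Im (g : nat -> C) (Sv : C)
  (HS : @is_series C_AbsRing C_NormedModule (fun k => alpha g (S k)) Sv) (t : R) (N : nat) :
  t < INR N + 1 ->
  Im (Gsharp g t) = Im Sv - sR (fun m => if Rle_dec (INR m) t then Im (alpha g m) else 0) N.
Proof.
  intros HN. unfold Gsharp, SeriesC. unfold Im at 1. cbv beta iota delta [snd].
  rewrite (Series_ext _ (fun k => (fun m => if Rlt_dec t (INR m) then Im (alpha g m) else 0) (S k))).
  - apply (real_series_from_sR (fun m => if Rlt_dec t (INR m) then Im (alpha g m) else 0)).
    apply tail_lim; [exact HN|].
    apply (series_C_comp _ _ HS).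
  - intros k. destruct (Rlt_dec t (INR (S k))); reflexivity.
Qed.

Lemma is_RInt_val {V : NormedModule R_AbsRing} (f : R -> V) a b l l' :
  is_RInt f a b l -> l = l' -> is_RInt f a b l'.
Proof. intros H <-. exact H. Qed.

Lemma is_RInt_zeroR (a b : R) : is_RInt (fun _ => 0) a b 0.
Proof. eapply is_RInt_val; [apply is_RInt_const|]. simpl. unfold scal; simpl. unfold mult; simpl. ring. Qed.

Lemma is_RInt_inv (p q : R) : 0 < p -> p <= q -> is_RInt (fun u => / u) p q (ln q - ln p).
Proof.
  intros Hp Hq.
  apply (is_RInt_derive ln (fun u => / u)).
  - intros x Hx. rewrite Rmin_left, Rmax_right in Hx by lra. apply is_derive_ln. lra.
  - intros x Hx. rewrite Rmin_left, Rmax_right in Hx by lra. apply continuous_Rinv. lra.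
Qed.

Lemma step_int (a b c : R) : 0 < a -> a <= b ->
  is_RInt (fun u => if Rle_dec c u then / u else 0) a b
    (if Rle_dec c a then ln b - ln a else if Rle_dec c b then ln b - ln c else 0).
Proof.
  intros Ha Hab. destruct (Rle_dec c a) as [Hca|Hca].
  - apply is_RInt_ext with (fun u => / u); [|apply is_RInt_inv; lra].
    intros x Hx. rewrite Rmin_left, Rmax_right in Hx by lra.
    destruct (Rle_dec c x); [reflexivity|lra].
  - destruct (Rle_dec c b) as [Hcb|Hcb].
    + eapply is_RInt_val. apply is_RInt_Chasles with c.
      * apply is_RInt_ext with (fun _ => 0); [|apply is_RInt_zeroR].
        intros x Hx. rewrite Rmin_left, Rmax_right in Hx by lra.
        destruct (Rle_dec c x); [lra|reflexivity].
      * apply is_RInt_ext with (fun u => / u); [|apply is_RInt_inv; lra].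
        intros x Hx. rewrite Rmin_left, Rmax_right in Hx by lra.
        destruct (Rle_dec c x); [reflexivity|lra].
      * simpl. unfold plus; simpl. ring.
    + apply is_RInt_ext with (fun _ => 0); [|apply is_RInt_zeroR].
      intros x Hx. rewrite Rmin_left, Rmax_right in Hx by lra.
      destruct (Rle_dec c x); [lra|reflexivity].
Qed.

Lemma is_RInt_sR (f : nat -> R -> R) (v : nat -> R) (a b : R) (N : nat) :
  (forall m, (1 <= m <= N)%nat -> is_RInt (f m) a b (v m)) ->
  is_RInt (fun t => sR (fun m => f m t) N) a b (sR v N).
Proof.
  induction N; intros H; cbn [sR].
  - apply is_RInt_zeroR.
  - apply (is_RInt_plus (fun t => sR (fun m => f m t) N) (f (S N))).
    + apply IHN. intros m Hm. apply H. lia.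
    + apply H. lia.
Qed.

Lemma ln_pos_gt1 (x : R) : 1 < x -> 0 < ln x.
Proof. intros H. rewrite <- ln_1. apply ln_increasing; lra. Qed.

Section Abel.
Variables (beta : nat -> R) (Sv L : R).
Hypothesis HS : is_lim_seq (fun n => sR beta n) Sv.
Hypothesis HL : is_lim_seq (fun n => sR (fun m => beta m * ln (INR m)) n) L.

Let T (n : nat) := L - sR (fun m => beta m * ln (INR m)) n.

Lemma T_lim : is_lim_seq T 0.
Proof.
  unfold T. replace (Finite 0) with (Rbar_minus L L) by (simpl; f_equal; ring).
  apply is_lim_seq_minus'; [apply is_lim_seq_const|exact HL].
Qed.

Lemma lnS_pos (N : nat) : (1 <= N)%nat -> 0 < ln (INR N + 1).
Proof.
  intros H. apply ln_pos_gt1. assert (1 <= INR N) by (apply (le_INR 1); lia). lra.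
Qed.

Lemma abel_bound (n : nat) (eps : R) : (1 <= n)%nat ->
  (forall m, (n <= m)%nat -> Rabs (T m) <= eps) ->
  Rabs (Sv - sR beta n) <= 2 * eps / ln (INR n + 1).
Proof.
  intros Hn HT.
  set (Q := fun N => (sR beta N - sR beta n) + T N / ln (INR N + 1)).
  assert (Hq : forall p, Rabs (Q (n + p)%nat) <= 2 * eps / ln (INR n + 1) - eps / ln (INR (n + p) + 1)).
  { induction p.
    - rewrite Nat.add_0_r. unfold Q. replace (sR beta n - sR beta n) with 0 by ring.
      rewrite Rplus_0_l. unfold Rdiv. rewrite Rabs_mult.
      pose proof (lnS_pos n Hn). rewrite (Rabs_right (/ _)) by (apply Rle_ge, Rlt_le, Rinv_0_lt_compat; lra).
      assert (Rabs (T n) * / ln (INR n + 1) <= eps * / ln (INR n + 1)).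
      { apply Rmult_le_compat_r; [apply Rlt_le, Rinv_0_lt_compat; lra|apply HT; lia]. }
      lra.
    - replace (n + S p)%nat with (S (n + p)) by lia.
      set (N := (n + p)%nat) in *.
      assert (HN : (1 <= N)%nat) by lia.
      pose proof (lnS_pos N HN) as P1. pose proof (lnS_pos (S N) ltac:(lia)) as P2.
      assert (Hln : ln (INR N + 1) <= ln (INR (S N) + 1)).
      { pose proof (pos_INR N). apply ln_le; [lra|]. rewrite S_INR; lra. }
      assert (Hb : beta (S N) = (T N - T (S N)) / ln (INR (S N))).
      { unfold T. cbn [sR]. rewrite S_INR. field. rewrite <- S_INR. 
        apply Rgt_not_eq. apply ln_pos_gt1. rewrite S_INR.
        assert (1 <= INR N) by (apply (le_INR 1); lia). lra. }
      assert (EQ : Q (S N) = Q N + T (S N) * (/ ln (INR (S N) + 1) - / ln (INR N + 1))).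
      { unfold Q. cbn [sR]. rewrite Hb. rewrite S_INR in *.
        assert (ln (INR N + 1) <> 0) by lra. assert (ln (INR N + 1 + 1) <> 0) by lra.
        field. repeat split; assumption. }
      rewrite EQ. eapply Rle_trans; [apply Rabs_triang|].
      rewrite Rabs_mult.
      assert (Hd : 0 <= / ln (INR N + 1) - / ln (INR (S N) + 1)).
      { assert (/ ln (INR (S N) + 1) <= / ln (INR N + 1)) by (apply Rinv_le_contravar; lra). lra. }
      rewrite Rabs_minus_sym, (Rabs_right (/ ln (INR N + 1) - _)) by lra.
      assert (Rabs (T (S N)) * (/ ln (INR N + 1) - / ln (INR (S N) + 1)) <=
              eps * (/ ln (INR N + 1) - / ln (INR (S N) + 1))).
      { apply Rmult_le_compat_r; [lra|]. apply HT. lia. }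
      unfold Rdiv in *. lra. }
  assert (HQlim : is_lim_seq Q (Sv - sR beta n)).
  { unfold Q. replace (Finite (Sv - sR beta n)) with (Rbar_plus (Sv - sR beta n) 0) by (simpl; f_equal; ring).
    apply is_lim_seq_plus'.
    - apply is_lim_seq_minus'; [exact HS|apply is_lim_seq_const].
    - pose proof (lnS_pos 1 ltac:(lia)) as L2. simpl INR in L2.
      apply is_lim_seq_le_le_loc with (u := fun N => - (/ ln (1 + 1) * Rabs (T N)))
                                      (w := fun N => / ln (1 + 1) * Rabs (T N)).
      + exists 1%nat. intros N HN. pose proof (lnS_pos N HN).
        assert (ln (1 + 1) <= ln (INR N + 1)).
        { apply ln_le; [lra|]. assert (1 <= INR N) by (apply (le_INR 1); lia). lra. }
        assert (Rabs (T N / ln (INR N + 1)) <= / ln (1 + 1) * Rabs (T N)).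
        { unfold Rdiv. rewrite Rabs_mult, Rmult_comm.
          rewrite (Rabs_right (/ _)) by (apply Rle_ge, Rlt_le, Rinv_0_lt_compat; lra).
          apply Rmult_le_compat_r; [apply Rabs_pos|]. apply Rinv_le_contravar; lra. }
        apply Rabs_le_between. exact H1.
      + generalize (proj1 (is_lim_seq_opp _ _) (is_lim_seq_scal_l _ (/ ln (1+1)) _ (is_lim_seq_abs _ _ T_lim))).
        simpl. rewrite Rabs_R0, Rmult_0_r, Ropp_0. auto.
      + generalize (is_lim_seq_scal_l _ (/ ln (1+1)) _ (is_lim_seq_abs _ _ T_lim)).
        simpl. rewrite Rabs_R0, Rmult_0_r. auto. }
  apply is_lim_seq_abs in HQlim.
  assert (H : Rbar_le (Rbar_abs (Sv - sR beta n)) (2 * eps / ln (INR n + 1))).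
  2:{ simpl in H. exact H. }
  apply is_lim_seq_le_loc with (u := fun N => Rabs (Q N)) (v := fun _ => 2 * eps / ln (INR n + 1)).
  - exists n. intros N HN. replace N with (n + (N - n))%nat by lia.
    eapply Rle_trans; [apply Hq|].
    assert (0 < ln (INR (n + (N - n)) + 1)) by (apply lnS_pos; lia).
    assert (0 <= eps / ln (INR (n + (N - n)) + 1)); [|lra].
    unfold Rdiv. apply Rmult_le_pos; [|apply Rlt_le, Rinv_0_lt_compat; lra].
    eapply Rle_trans; [apply Rabs_pos|apply (HT n); lia].
  - exact HQlim.
  - apply is_lim_seq_const.
Qed.

Lemma abel_lim : is_lim_seq (fun n => (Sv - sR beta n) * ln (INR n + 1)) 0.
Proof.
  apply is_lim_seq_spec. intros eps.
  pose proof T_lim as TL. apply is_lim_seq_spec in TL.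
  assert (He : 0 < eps / 3) by (destruct eps; simpl; lra).
  destruct (TL (mkposreal _ He)) as [N0 HN0]. simpl in HN0.
  exists (max N0 1). intros n Hn.
  assert (Hb := abel_bound n (eps / 3) ltac:(lia)).
  assert (Hb' : forall m, (n <= m)%nat -> Rabs (T m) <= eps / 3).
  { intros m Hm. specialize (HN0 m ltac:(lia)). rewrite Rminus_0_r in HN0. lra. }
  specialize (Hb Hb'). pose proof (lnS_pos n ltac:(lia)).
  rewrite Rminus_0_r, Rabs_mult, (Rabs_right (ln _)) by lra.
  apply Rle_lt_trans with (2 * (eps / 3) / ln (INR n + 1) * ln (INR n + 1)).
  - apply Rmult_le_compat_r; lra.
  - replace (2 * (eps / 3) / ln (INR n + 1) * ln (INR n + 1)) with (2 * (eps / 3)) by (field; lra).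
    destruct eps; simpl in *; lra.
Qed.
End Abel.

Lemma is_RInt_scalR (f : R -> R) a b k l : is_RInt f a b l -> is_RInt (fun y => k * f y) a b (k * l).
Proof. intros H. exact (is_RInt_scal f a b k l H). Qed.
Lemma is_RInt_minusR (f h : R -> R) a b l1 l2 : is_RInt f a b l1 -> is_RInt h a b l2 ->
  is_RInt (fun y => f y - h y) a b (l1 - l2).
Proof. intros H1 H2. exact (is_RInt_minus f h a b l1 l2 H1 H2). Qed.

Definition fl (b : R) : nat := Z.to_nat (up b - 1).
Lemma fl_spec (b : R) : 0 <= b -> INR (fl b) <= b < INR (fl b) + 1.
Proof.
  intros Hb. destruct (archimed b) as [H1 H2]. unfold fl.
  assert (Hu : (1 <= up b)%Z) by (assert (0 < up b)%Z by (apply lt_IZR; simpl; lra); lia).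
  rewrite INR_IZR_INZ, Z2Nat.id by lia. rewrite minus_IZR. simpl. lra.
Qed.

Section Comp.
Variables (G : R -> R) (beta : nat -> R) (s0 l0 X : R) (K : nat).
Hypothesis HX : 0 < X.
Hypothesis Gform : forall t N, t < INR N + 1 ->
  G t = s0 - sR (fun m => if Rle_dec (INR m) t then beta m else 0) N.
Hypothesis HSb : is_lim_seq (fun n => sR beta n) s0.
Hypothesis HLb : is_lim_seq (fun n => sR (fun m => beta m * ln (INR m)) n) l0.
Hypothesis HK : X < INR K + 1.

Definition vstep (m : nat) (b : R) : R :=
  if Rle_dec (INR m) X then ln b - ln X else if Rle_dec (INR m) b then ln b - ln (INR m) else 0.

Definition Jv (b : R) : R := s0 * (ln b - ln X) - sR (fun m => beta m * vstep m b) (fl b).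

Definition Iv : R := l0 - ln X * s0 +
  sR (fun m => beta m * ((if Rle_dec (INR m) X then 1 else 0) * (ln X - ln (INR m)))) K.

Lemma J_int (b : R) : X <= b -> is_RInt (fun t => G t / t) X b (Jv b).
Proof.
  intros Hb. pose proof (fl_spec b ltac:(lra)) as [F1 F2].
  apply is_RInt_ext with (fun t => s0 * / t - sR (fun m => beta m * (if Rle_dec (INR m) t then / t else 0)) (fl b)).
  - intros t Ht. rewrite Rmin_left, Rmax_right in Ht by lra.
    rewrite (Gform t (fl b)) by lra. unfold Rdiv. rewrite Rmult_minus_distr_r.
    f_equal. rewrite Rmult_comm, <- sR_scal. apply sR_ext. intros k _.
    destruct (Rle_dec (INR k) t); ring.
  - apply is_RInt_minusR.
    + apply is_RInt_scalR. apply is_RInt_inv; lra.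
    + apply is_RInt_sR. intros m _. apply is_RInt_scalR.
      eapply is_RInt_val; [apply step_int; lra|]. unfold vstep.
      destruct (Rle_dec (INR m) X); reflexivity.
Qed.

Lemma J_diff (b : R) : X <= b -> (K <= fl b)%nat ->
  Jv b - Iv = (s0 - sR beta (fl b)) * ln b + (sR (fun m => beta m * ln (INR m)) (fl b) - l0).
Proof.
  intros Hb HKn. pose proof (fl_spec b ltac:(lra)) as [F1 F2].
  set (n := fl b) in *.
  set (P := fun m => if Rle_dec (INR m) X then 1 else 0).
  assert (E1 : sR (fun m => beta m * vstep m b) n =
     ln b * sR beta n - sR (fun m => beta m * ln (INR m)) n -
     sR (fun m => beta m * (P m * (ln X - ln (INR m)))) n).
  { replace (ln b * sR beta n - sR (fun m => beta m * ln (INR m)) n -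
      sR (fun m => beta m * (P m * (ln X - ln (INR m)))) n) with
      (sR (fun m => ln b * beta m + (-1) * (beta m * ln (INR m)) + (-1) * (beta m * (P m * (ln X - ln (INR m))))) n)
      by (rewrite !sR_plus, !sR_scal; lra).
    apply sR_ext. intros k Hk. unfold vstep, P.
    assert (INR k <= INR n) by (apply le_INR; lia).
    destruct (Rle_dec (INR k) X); [ring|].
    destruct (Rle_dec (INR k) b); [ring|lra]. }
  assert (E2 : sR (fun m => beta m * (P m * (ln X - ln (INR m)))) n =
               sR (fun m => beta m * (P m * (ln X - ln (INR m)))) K).
  { replace n with (K + (n - K))%nat by lia. apply sR_ext_zero.
    intros k Hk. unfold P. destruct (Rle_dec (INR k) X) as [C|]; [|ring].
    exfalso. assert (INR K + 1 <= INR k) by (rewrite <- S_INR; apply le_INR; lia). lra. }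
  unfold Jv, Iv. fold n. rewrite E1, E2. unfold P. cbv beta. ring.
Qed.

Lemma J_lim : filterlim Jv (Rbar_locally p_infty) (locally Iv).
Proof.
  apply filterlim_locally. intros eps.
  pose proof (abel_lim beta s0 l0 HSb HLb) as A. apply is_lim_seq_spec in A.
  pose proof HLb as B. apply is_lim_seq_spec in B.
  assert (He : 0 < eps / 2) by (destruct eps; simpl; lra).
  destruct (A (mkposreal _ He)) as [N1 HN1]. destruct (B (mkposreal _ He)) as [N2 HN2].
  simpl in HN1, HN2.
  exists (INR (N1 + N2 + K) + X + 1). intros b Hb.
  assert (HXb : X <= b).
  { assert (0 <= INR (N1 + N2 + K)) by apply pos_INR. lra. }
  pose proof (fl_spec b ltac:(lra)) as [F1 F2].
  assert (Hn : (N1 + N2 + K <= fl b)%nat).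
  { apply INR_le. apply (Rplus_le_reg_r 1). assert (0 < X) by exact HX. lra. }
  change (Rabs (Jv b - Iv) < eps).
  rewrite J_diff by (auto; lia).
  specialize (HN1 (fl b) ltac:(lia)). specialize (HN2 (fl b) ltac:(lia)).
  rewrite Rminus_0_r in HN1.
  assert (Hb1 : 1 < b).
  { assert (0 <= INR (N1 + N2 + K)) by apply pos_INR. lra. }
  assert (Hlb : 0 < ln b) by (apply ln_pos_gt1; lra).
  assert (Hlb2 : ln b <= ln (INR (fl b) + 1)) by (apply ln_le; lra).
  assert (Rabs ((s0 - sR beta (fl b)) * ln b) <= Rabs ((s0 - sR beta (fl b)) * ln (INR (fl b) + 1))).
  { rewrite !Rabs_mult. apply Rmult_le_compat_l; [apply Rabs_pos|].
    rewrite !Rabs_right; lra. }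
  eapply Rle_lt_trans; [apply Rabs_triang|].
  destruct eps; simpl in *; lra.
Qed.
End Comp.

Lemma C_ext (z w : C) : Re z = Re w -> Im z = Im w -> z = w.
Proof. destruct z, w. unfold Re, Im. simpl. intros -> ->. reflexivity. Qed.

Lemma Re_div_R (z : C) (t : R) : t <> 0 -> Re (z / RtoC t)%C = Re z / t.
Proof. intros H. unfold Cdiv. rewrite <- RtoC_inv by exact H. rewrite re_scal_r. reflexivity. Qed.
Lemma Im_div_R (z : C) (t : R) : t <> 0 -> Im (z / RtoC t)%C = Im z / t.
Proof. intros H. unfold Cdiv. rewrite <- RtoC_inv by exact H. rewrite im_scal_r. reflexivity. Qed.

Lemma RInt_gen_C (g : nat -> C) (Sv Lv : C) (X : R) (K : nat)
  (HS : @is_series C_AbsRing C_NormedModule (fun k => alpha g (S k)) Sv)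
  (HX : 0 < X) (HK : X < INR K + 1)
  (HSre : is_lim_seq (fun n => sR (fun m => Re (alpha g m)) n) (Re Sv))
  (HSim : is_lim_seq (fun n => sR (fun m => Im (alpha g m)) n) (Im Sv))
  (HLre : is_lim_seq (fun n => sR (fun m => Re (alpha g m) * ln (INR m)) n) (Re Lv))
  (HLim : is_lim_seq (fun n => sR (fun m => Im (alpha g m) * ln (INR m)) n) (Im Lv)) :
  is_RInt_gen (fun t => (Gsharp g t / RtoC t)%C) (at_point X) (Rbar_locally p_infty)
    (Iv (fun m => Re (alpha g m)) (Re Sv) (Re Lv) X K, Iv (fun m => Im (alpha g m)) (Im Sv) (Im Lv) X K).
Proof.
  set (br := fun m => Re (alpha g m)). set (bi := fun m => Im (alpha g m)).
  assert (GR : forall t N, t < INR N + 1 ->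
     Re (Gsharp g t) = Re Sv - sR (fun m => if Rle_dec (INR m) t then br m else 0) N).
  { intros t N H. apply (Gsharp_Re g Sv HS t N H). }
  assert (GI : forall t N, t < INR N + 1 ->
     Im (Gsharp g t) = Im Sv - sR (fun m => if Rle_dec (INR m) t then bi m else 0) N).
  { intros t N H. apply (Gsharp_Im g Sv HS t N H). }
  assert (LIM : @filterlim _ (prod_UniformSpace R_UniformSpace R_UniformSpace)
     (fun b => (Jv br (Re Sv) X b, Jv bi (Im Sv) X b)) (Rbar_locally p_infty)
     (locally (Iv br (Re Sv) (Re Lv) X K, Iv bi (Im Sv) (Im Lv) X K))).
  { apply lim_prod_intro; simpl.
    - apply (J_lim br (Re Sv) (Re Lv) X K HX HSre HLre HK).
    - apply (J_lim bi (Im Sv) (Im Lv) X K HX HSim HLim HK). }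
  intros P HP. unfold filtermapi.
  apply Filter_prod with (Q := fun a => a = X)
    (R := fun b => X <= b /\ P (Jv br (Re Sv) X b, Jv bi (Im Sv) X b)).
  - reflexivity.
  - assert (E1 : Rbar_locally p_infty (fun b => X <= b)) by (exists X; intros; lra).
    assert (E2 : Rbar_locally p_infty (fun b => P (Jv br (Re Sv) X b, Jv bi (Im Sv) X b))).
    { apply LIM. exact HP. }
    generalize (filter_and _ _ E1 E2). apply filter_imp. auto.
  - intros a b -> [Hb HPb]. exists (Jv br (Re Sv) X b, Jv bi (Im Sv) X b). split; [|exact HPb].
    apply is_RInt_fct_extend_pair.
    + apply is_RInt_ext with (fun t => Re (Gsharp g t) / t).
      * intros t Ht. simpl in Ht. rewrite Rmin_left, Rmax_right in Ht by lra.
        symmetry. apply Re_div_R. lra.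
      * apply (J_int (fun t => Re (Gsharp g t)) br (Re Sv) X HX GR b Hb).
    + apply is_RInt_ext with (fun t => Im (Gsharp g t) / t).
      * intros t Ht. simpl in Ht. rewrite Rmin_left, Rmax_right in Ht by lra.
        symmetry. apply Im_div_R. lra.
      * apply (J_int (fun t => Im (Gsharp g t)) bi (Im Sv) X HX GI b Hb).
Qed.

Lemma up_mono (x y : R) : x <= y -> (Z.to_nat (up x) <= Z.to_nat (up y))%nat.
Proof.
  intros H. destruct (archimed x) as [A1 A2]. destruct (archimed y) as [B1 B2].
  assert (up x < up y + 1)%Z by (apply lt_IZR; rewrite plus_IZR; simpl; lra). lia.
Qed.

Definition wv (D c : R) (m : nat) : R :=
  if Rle_dec (INR m / D) 1 then ln (exp c) - ln 1
  else if Rle_dec (INR m / D) (exp c) then ln (exp c) - ln (INR m / D) else 0.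

Lemma RHS_int (g : nat -> C) (D c : R) (K : nat) : 1 <= D -> 0 <= c ->
  (forall x, x <= exp c * D -> (Z.to_nat (up x) <= K)%nat) ->
  RInt (fun u => sumR_le (fun m => Cmod (g m)) (u * D) / u) 1 (exp c) =
  sR (fun m => Cmod (g m) * wv D c m) K.
Proof.
  intros HD Hc HK. assert (He : 1 <= exp c) by (pose proof (exp_ineq1_le c); lra).
  apply is_RInt_unique.
  apply is_RInt_ext with (fun u => sR (fun m => Cmod (g m) * (if Rle_dec (INR m / D) u then / u else 0)) K).
  - intros u Hu. rewrite Rmin_left, Rmax_right in Hu by lra.
    rewrite (sumR_le_eq _ _ K).
    2:{ apply HK. apply Rmult_le_compat_r; lra. }
    symmetry.
    match goal with |- sR ?f K / u = _ => replace (sR f K / u) with (/ u * sR f K) by (unfold Rdiv; ring) end.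
    rewrite <- sR_scal. apply sR_ext. intros m _.
    destruct (Rle_dec (INR m) (u * D)) as [A|A]; destruct (Rle_dec (INR m / D) u) as [B|B].
    + ring.
    + exfalso. apply B. apply Rmult_le_reg_r with D; [lra|].
      replace (INR m / D * D) with (INR m) by (field; lra). exact A.
    + exfalso. apply A. apply Rmult_le_reg_r with (/ D); [apply Rinv_0_lt_compat; lra|].
      replace (u * D * / D) with u by (field; lra). exact B.
    + ring.
  - apply is_RInt_sR. intros m _. apply is_RInt_scalR.
    eapply is_RInt_val; [apply step_int; lra|]. unfold wv.
    reflexivity.
Qed.

Lemma Cmod_alpha_R (g : nat -> C) (m : nat) (r : R) : (1 <= m)%nat ->
  Cmod (alpha g m * RtoC r)%C = Cmod (g m) / INR m * Rabs r.
Proof.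
  intros Hm. assert (0 < INR m) by (apply lt_0_INR; lia).
  unfold alpha. rewrite Cmod_mult, Cmod_div, !Cmod_R, (Rabs_right (INR m)) by (try apply RtoC_neq0; lra).
  reflexivity.
Qed.

Lemma final_bound (g : nat -> C) (D : R) (K : nat) : 1 <= D -> D <= INR K ->
  Cmod (sC (fun m => (alpha g m * RtoC ((if Rle_dec (INR m) (exp euler_gamma * D) then 1 else 0) *
          (Hy (D / INR m) K - (euler_gamma + ln (D / INR m)))))%C) K)
  <= / D * sR (fun m => Cmod (g m) * wv D euler_gamma m) K.
Proof.
  intros HD HDK. pose proof gamma_ge_half as Hg.
  eapply Rle_trans; [apply sC_norm|]. rewrite <- sR_scal. apply sR_le. intros m Hm.
  rewrite Cmod_alpha_R by lia.
  assert (HmR : 1 <= INR m) by (apply (le_INR 1); lia).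
  assert (Hcm : 0 <= Cmod (g m)) by apply Cmod_ge_0.
  unfold wv. rewrite ln_exp, ln_1.
  destruct (Rle_dec (INR m) (exp euler_gamma * D)) as [PX|PX].
  - destruct (Rle_dec (INR m / D) 1) as [C1|C1].
    +
      assert (Hm1 : INR m <= D).
      { apply Rmult_le_reg_r with (/ D); [apply Rinv_0_lt_compat; lra|].
        rewrite Rinv_r by lra. exact C1. }
      assert (Hy1 : 1 <= D / INR m).
      { apply Rmult_le_reg_r with (INR m); [lra|]. replace (D / INR m * INR m) with D by (field; lra). lra. }
      assert (HyK : D / INR m <= INR K).
      { apply Rle_trans with D; [|exact HDK]. apply Rmult_le_reg_r with (INR m); [lra|].
        replace (D / INR m * INR m) with D by (field; lra). nra. }
      pose proof (Hy_bound_ge1 (D / INR m) K Hy1 HyK) as B.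
      rewrite Rmult_1_l.
      replace (Hy (D / INR m) K - (euler_gamma + ln (D / INR m)))
        with (Hy (D / INR m) K - ln (D / INR m) - euler_gamma) by ring.
      replace (euler_gamma / (D / INR m)) with (euler_gamma * INR m / D) in B by (field; lra).
      apply Rle_trans with (Cmod (g m) / INR m * (euler_gamma * INR m / D)).
      * apply Rmult_le_compat_l; [apply Rmult_le_pos; [lra|apply Rlt_le, Rinv_0_lt_compat; lra]|exact B].
      * right. field. lra.
    +
      assert (Hm1 : D < INR m).
      { apply Rnot_le_lt in C1. apply Rmult_lt_reg_r with (/ D); [apply Rinv_0_lt_compat; lra|].
        rewrite Rinv_r by lra. exact C1. }
      destruct (Rle_dec (INR m / D) (exp euler_gamma)) as [C2|C2].
      2:{ exfalso. apply C2. apply Rmult_le_reg_r with D; [lra|].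
          replace (INR m / D * D) with (INR m) by (field; lra). lra. }
      rewrite Hy_lt1.
      2:{ apply Rmult_lt_reg_r with (INR m); [lra|]. replace (D / INR m * INR m) with D by (field; lra). lra. }
      assert (Eln : ln (D / INR m) = - ln (INR m / D)).
      { rewrite !ln_div by lra. ring. }
      assert (Hpos : 0 <= euler_gamma - ln (INR m / D)).
      { rewrite <- (ln_exp euler_gamma) at 1. assert (ln (INR m / D) <= ln (exp euler_gamma)); [|lra].
        apply ln_le; [apply Rdiv_lt_0_compat; lra|exact C2]. }
      rewrite Rmult_1_l, Eln.
      replace (0 - (euler_gamma + - ln (INR m / D))) with (- (euler_gamma - ln (INR m / D))) by ring.
      rewrite Rabs_Ropp, Rabs_right by lra.
      replace (/ D * (Cmod (g m) * (euler_gamma - ln (INR m / D))))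
        with (Cmod (g m) * / D * (euler_gamma - ln (INR m / D))) by ring.
      apply Rmult_le_compat_r; [lra|]. unfold Rdiv. apply Rmult_le_compat_l; [lra|].
      apply Rinv_le_contravar; lra.
  - rewrite Rmult_0_l, Rabs_R0, Rmult_0_r.
    destruct (Rle_dec (INR m / D) 1); [|destruct (Rle_dec (INR m / D) (exp euler_gamma))].
    + assert (0 < / D) by (apply Rinv_0_lt_compat; lra). apply Rmult_le_pos; [lra|].
      apply Rmult_le_pos; lra.
    + exfalso. apply PX. apply Rmult_le_reg_r with (/ D); [apply Rinv_0_lt_compat; lra|].
      replace (exp euler_gamma * D * / D) with (exp euler_gamma) by (field; lra). exact r.
    + lra.
Qed.

Lemma re_mulR (z : C) (r : R) : Re (z * RtoC r)%C = Re z * r.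
Proof. apply re_scal_r. Qed.
Lemma im_mulR (z : C) (r : R) : Im (z * RtoC r)%C = Im z * r.
Proof. apply im_scal_r. Qed.

Lemma lam_alpha (g : nat -> C) (m : nat) : (1 <= m)%nat ->
  (g m * RtoC (ln (INR m)) / RtoC (INR m))%C = (alpha g m * RtoC (ln (INR m)))%C.
Proof.
  intros Hm. assert (INR m <> 0) by (apply not_0_INR; lia).
  unfold alpha. field. apply RtoC_neq0. exact H.
Qed.

Theorem mainTheorem11 (g : nat -> C)
  (Hconv1 : ex_series (fun k : nat => (g (S k) / RtoC (INR (S k)))%C))
  (Hconv2 : ex_series (fun k : nat =>
              (g (S k) * RtoC (ln (INR (S k))) / RtoC (INR (S k)))%C))
  (Hint : ex_RInt_gen (fun t : R => (Cmod (Gsharp g t) / t)%R)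
            (at_point 1%R) (Rbar_locally p_infty))
  (D : R) (HD : (1 <= D)%R) :
  exists (Ssum I : C),
    is_series (fun k : nat =>
      (g (S k) / RtoC (INR (S k)) *
       RtoC (ln (D / INR (S k)) + euler_gamma))%C) Ssum /\
    is_RInt_gen (fun t : R => (Gsharp g t / RtoC t)%C)
      (at_point (exp euler_gamma * D)%R) (Rbar_locally p_infty) I /\
    (Cmod (sumC_le (fun n => (conv1 g n / RtoC (INR n))%C) D - Ssum - I)
     <= / D * RInt (fun u : R => (sumR_le (fun m => Cmod (g m)) (u * D) / u)%R)
                   1 (exp euler_gamma))%R.
Proof.
  destruct Hconv1 as [Sv HS]. destruct Hconv2 as [Lv HL].
  change (@is_series C_AbsRing C_NormedModule (fun k => alpha g (S k)) Sv) in HS.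
  change (@is_series C_AbsRing C_NormedModule
    (fun k => (fun m => (g m * RtoC (ln (INR m)) / RtoC (INR m))%C) (S k)) Lv) in HL.
  pose proof gamma_ge_half as Hg.
  assert (Hexp : 1 + euler_gamma <= exp euler_gamma) by apply exp_ineq1_le.
  set (X := exp euler_gamma * D).
  assert (HX1 : D <= X) by (unfold X; nra).
  set (K := Z.to_nat (up X)).
  assert (HK : X < INR K + 1).
  { destruct (archimed X) as [A1 A2]. unfold K.
    assert (0 < up X)%Z by (apply lt_IZR; simpl; lra).
    rewrite INR_IZR_INZ, Z2Nat.id by lia. lra. }
  assert (HKge : X <= INR K).
  { destruct (archimed X) as [A1 A2]. unfold K.
    assert (0 < up X)%Z by (apply lt_IZR; simpl; lra).
    rewrite INR_IZR_INZ, Z2Nat.id by lia. lra. }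
  assert (HDK : D <= INR K) by lra.
  assert (HUK : (Z.to_nat (up D) <= K)%nat) by (apply up_mono; exact HX1).
  destruct (series_C_comp _ _ HS) as [HSre HSim].
  destruct (series_C_comp _ _ HL) as [HLre0 HLim0].
  assert (HLre : is_lim_seq (fun n => sR (fun m => Re (alpha g m) * ln (INR m)) n) (Re Lv)).
  { eapply is_lim_seq_ext; [|exact HLre0]. intros n. apply sR_ext. intros k Hk.
    rewrite lam_alpha by lia. apply re_mulR. }
  assert (HLim : is_lim_seq (fun n => sR (fun m => Im (alpha g m) * ln (INR m)) n) (Im Lv)).
  { eapply is_lim_seq_ext; [|exact HLim0]. intros n. apply sR_ext. intros k Hk.
    rewrite lam_alpha by lia. apply im_mulR. }
  assert (HX0 : 0 < X) by lra.
  exists (RtoC (ln D + euler_gamma) * Sv - Lv)%C.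
  exists (Iv (fun m => Re (alpha g m)) (Re Sv) (Re Lv) X K, Iv (fun m => Im (alpha g m)) (Im Sv) (Im Lv) X K).
  split; [|split].
  -
    apply (series_C_intro (fun m => (g m / RtoC (INR m) * RtoC (ln (D / INR m) + euler_gamma))%C)).
    + eapply is_lim_seq_ext with
        (u := fun n => (ln D + euler_gamma) * sR (fun m => Re (alpha g m)) n
                       - sR (fun m => Re (alpha g m) * ln (INR m)) n).
      * intros n. symmetry.
        transitivity (sR (fun k => (ln D + euler_gamma) * Re (alpha g k) + (-1) * (Re (alpha g k) * ln (INR k))) n).
        2:{ rewrite sR_plus, !sR_scal. ring. }
        apply sR_ext. intros k Hk.
        assert (0 < INR k) by (apply lt_0_INR; lia).
        change (g k / RtoC (INR k))%C with (alpha g k). rewrite re_mulR.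
        rewrite ln_div by lra. ring.
      * unfold Cminus. rewrite re_plus, re_opp, re_scal_l.
        apply is_lim_seq_minus'; [|exact HLre].
        apply (is_lim_seq_scal_l _ _ (Finite (Re Sv))). exact HSre.
    + eapply is_lim_seq_ext with
        (u := fun n => (ln D + euler_gamma) * sR (fun m => Im (alpha g m)) n
                       - sR (fun m => Im (alpha g m) * ln (INR m)) n).
      * intros n. symmetry.
        transitivity (sR (fun k => (ln D + euler_gamma) * Im (alpha g k) + (-1) * (Im (alpha g k) * ln (INR k))) n).
        2:{ rewrite sR_plus, !sR_scal. ring. }
        apply sR_ext. intros k Hk.
        assert (0 < INR k) by (apply lt_0_INR; lia).
        change (g k / RtoC (INR k))%C with (alpha g k). rewrite im_mulR.
        rewrite ln_div by lra. ring.
      * unfold Cminus. rewrite im_plus, im_opp, im_scal_l.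
        apply is_lim_seq_minus'; [|exact HLim].
        apply (is_lim_seq_scal_l _ _ (Finite (Im Sv))). exact HSim.
  - apply RInt_gen_C; assumption.
  - rewrite (LHS_eq g D K HD HDK HUK).
    set (P := fun m => if Rle_dec (INR m) X then 1 else 0).
    assert (EI : (Iv (fun m => Re (alpha g m)) (Re Sv) (Re Lv) X K, Iv (fun m => Im (alpha g m)) (Im Sv) (Im Lv) X K)
       = (Lv - RtoC (ln X) * Sv + sC (fun m => alpha g m * RtoC (P m * (ln X - ln (INR m)))) K)%C).
    { apply C_ext.
      - unfold Re at 1. simpl fst. unfold Iv. unfold Cminus.
        rewrite !re_plus, re_opp, re_scal_l, Re_sC. f_equal. apply sR_ext. intros k _.
        rewrite re_mulR. reflexivity.
      - unfold Im at 1. simpl snd. unfold Iv. unfold Cminus.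
        rewrite !im_plus, im_opp, im_scal_l, Im_sC. f_equal. apply sR_ext. intros k _.
        rewrite im_mulR. reflexivity. }
    rewrite EI.
    assert (HlnX : ln X = euler_gamma + ln D).
    { unfold X. rewrite ln_mult by (try apply exp_pos; lra). rewrite ln_exp. reflexivity. }
    assert (E : (sC (fun m => g m / RtoC (INR m) * RtoC (Hy (D / INR m) K)) K -
                 (RtoC (ln D + euler_gamma) * Sv - Lv) -
                 (Lv - RtoC (ln X) * Sv + sC (fun m => alpha g m * RtoC (P m * (ln X - ln (INR m)))) K))%C
              = sC (fun m => (alpha g m * RtoC (P m * (Hy (D / INR m) K - (euler_gamma + ln (D / INR m)))))%C) K).
    { rewrite HlnX.
      transitivity (Cplus (sC (fun m => alpha g m * RtoC (Hy (D / INR m) K)) K)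
                     (Cmult (RtoC (-1)) (sC (fun m => alpha g m * RtoC (P m * (euler_gamma + ln D - ln (INR m)))) K)))%C.
      { unfold alpha. rewrite !RtoC_plus. replace (RtoC (-1)) with (Copp (RtoC 1)) by (apply C_ext; unfold Re, Im; simpl; lra).
        ring. }
      rewrite <- sC_scal, <- sC_plus. apply sC_ext. intros m Hm.
      assert (0 < INR m) by (apply lt_0_INR; lia).
      assert (Er : Hy (D / INR m) K - P m * (euler_gamma + ln D - ln (INR m)) =
                   P m * (Hy (D / INR m) K - (euler_gamma + ln (D / INR m)))).
      { unfold P. rewrite ln_div by lra. destruct (Rle_dec (INR m) X) as [C|C]; [ring|].
        rewrite Hy_lt1; [ring|]. apply Rmult_lt_reg_r with (INR m); [lra|].
        replace (D / INR m * INR m) with D by (field; lra). lra. }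
      rewrite <- Er, RtoC_minus. ring. }
    rewrite E. unfold P, X.
    eapply Rle_trans; [apply final_bound; assumption|].
    rewrite (RHS_int g D euler_gamma K HD ltac:(lra)); [lra|].
    intros x Hx. apply up_mono. exact Hx.
Qed.
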